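(* Let $\mathcal{F},G:\mathbb{R}^p\times\mathbb{R}^q\to\mathbb{R}$ satisfy the standing assumptions (A1) and (A2) with constants $L>0$ and $M<\infty$, and fix $\delta>0$ and $\xi\in(0,1)$. Fix the total number of iterations $T\ge 1$ and constants $c>0$, $C>0$. Suppose the learning rates are constant in $t$, with $\eta_\alpha^{(t)}=\eta_\alpha=\frac{c}{T}$ where $\frac{c}{T}<1$, and $\eta_w^{(t)}=\eta_w=\frac{C}{\sqrt T}$ where $$\frac{C}{\sqrt T}<\min\Big(\frac{1-\xi}{L},\,1\Big).$$ Let $(w^t,\alpha^t)_{t\ge1}$ be generated by the EBOMLC iteration from an arbitrary initial point $(w^1,\alpha^1)$. Then there is a constant $H$ depending only on $M,L,\delta,\xi,c,C$ (and on $\mathcal{F}(w^1,\alpha^1)$), but not on $T$, such that $$\min_{1\le t\le T}\big\|\nabla_w\mathcal{F}(w^t,\alpha^t)\big\|^2\le \frac{H}{\sqrt T}.$$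
   Context: Notation: $\|\cdot\|$ is the Euclidean norm; for a function $\Phi(w,\alpha)$ of $(w,\alpha)\in\mathbb{R}^p\times\mathbb{R}^q$, $\nabla\Phi=(\nabla_w\Phi,\nabla_\alpha\Phi)$ denotes the full gradient in the joint variable. Standing assumptions. (A1) $\mathcal{F}$ and $G$ are differentiable on $\mathbb{R}^p\times\mathbb{R}^q$ and $\nabla\mathcal{F}$, $\nabla G$ are $L$-Lipschitz with respect to the joint variable $(w,\alpha)$, for some $L>0$. (A2) There is a finite $M$ such that for all $(w,\alpha)$: $|\mathcal{F}(w,\alpha)|\le M$, $|G(w,\alpha)|\le M$, $\|\nabla\mathcal{F}(w,\alpha)\|\le M$, $\|\nabla G(w,\alpha)\|\le M$. EBOMLC iteration. Fix constants $\delta>0$, $\xi\in(0,1)$ and positive learning rates $\eta_w^{(t)},\eta_\alpha^{(t)}$. Given $(w^t,\alpha^t)$, set $w^t_{(1)}=w^t-\eta_w^{(t)}\nabla_wG(w^t,\alpha^t)$ and define $\mathcal{Q}_t(w,\alpha)=G(w,\alpha)-G(w^t_{(1)},\alpha)$, where $w^t_{(1)}$ is treated as a constant when differentiating, so that $$\nabla\mathcal{Q}(w^t,\alpha^t):=\nabla G(w^t,\alpha^t)-\nabla G(w^t_{(1)},\alpha^t),$$ with components $\nabla_w\mathcal{Q},\nabla_\alpha\mathcal{Q}$. Define $$\bar\beta_t=\max\Big(\delta-\frac{\nabla_w\mathcal{F}(w^t,\alpha^t)^T\nabla_w\mathcal{Q}(w^t,\alpha^t)}{\|\nabla\mathcal{Q}(w^t,\alpha^t)\|^2},\,0\Big)$$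 if $\nabla\mathcal{Q}(w^t,\alpha^t)\neq0$, and $\bar\beta_t=0$ otherwise. Then update $$w^{t+1}=w^t-\eta_w^{(t)}\big(\nabla_w\mathcal{F}(w^t,\alpha^t)+\xi\bar\beta_t\nabla_w\mathcal{Q}(w^t,\alpha^t)\big),$$ $$\alpha^{t+1}=\alpha^t-\eta_\alpha^{(t)}\big(\nabla_\alpha\mathcal{F}(w^t,\alpha^t)+\xi\bar\beta_t\nabla_\alpha\mathcal{Q}(w^t,\alpha^t)\big).$$ (In the paper $w$ are main-model parameters, $\alpha$ meta-model parameters, $\mathcal{F}$ a mixture upper loss and $G$ a lower loss, but only (A1), (A2) are used.) *)

(* Defs.v *)
From HB Require Import structures.
From mathcomp Require Import all_boot all_order all_algebra.
From mathcomp Require Import all_classical all_reals all_analysis.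
Set Implicit Arguments. Unset Strict Implicit. Unset Printing Implicit Defensive.
Import Order.TTheory GRing.Theory Num.Theory.
Import numFieldNormedType.Exports.
Local Open Scope ring_scope.

Section Defs.
Variable R : realType.

Definition dotv (n : nat) (u v : 'rV[R]_n) : R := \sum_(i < n) u 0 i * v 0 i.
Definition nrm2 (n : nat) (u : 'rV[R]_n) : R := dotv u u.

Variables p q : nat.

Definition jnrm2 (u : 'rV[R]_p) (v : 'rV[R]_q) : R := nrm2 u + nrm2 v.
Definition jnrm (u : 'rV[R]_p) (v : 'rV[R]_q) : R := Num.sqrt (jnrm2 u v).

Definition has_grad (Phi : 'rV[R]_p -> 'rV[R]_q -> R)
  (gw : 'rV[R]_p -> 'rV[R]_q -> 'rV[R]_p) (ga : 'rV[R]_p -> 'rV[R]_q -> 'rV[R]_q) : Prop :=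
  forall (w : 'rV[R]_p) (a : 'rV[R]_q),
    differentiable (fun x : 'rV[R]_p * 'rV[R]_q => Phi x.1 x.2) (w, a) /\
    forall h : 'rV[R]_p * 'rV[R]_q,
      'd (fun x : 'rV[R]_p * 'rV[R]_q => Phi x.1 x.2) (w, a) h = dotv (gw w a) h.1 + dotv (ga w a) h.2.

Definition grad_lipschitz (gw : 'rV[R]_p -> 'rV[R]_q -> 'rV[R]_p)
  (ga : 'rV[R]_p -> 'rV[R]_q -> 'rV[R]_q) (L : R) : Prop :=
  forall w a w' a',
    jnrm (gw w a - gw w' a') (ga w a - ga w' a') <= L * jnrm (w - w') (a - a').

Section Step.
Variables (Fw : 'rV[R]_p -> 'rV[R]_q -> 'rV[R]_p) (Fa : 'rV[R]_p -> 'rV[R]_q -> 'rV[R]_q).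
Variables (Gw : 'rV[R]_p -> 'rV[R]_q -> 'rV[R]_p) (Ga : 'rV[R]_p -> 'rV[R]_q -> 'rV[R]_q).
Variables (delta xi etaw etaa : R).

Definition w_one (w : 'rV[R]_p) (a : 'rV[R]_q) : 'rV[R]_p := w - etaw *: Gw w a.
Definition gradQw (w : 'rV[R]_p) (a : 'rV[R]_q) : 'rV[R]_p := Gw w a - Gw (w_one w a) a.
Definition gradQa (w : 'rV[R]_p) (a : 'rV[R]_q) : 'rV[R]_q := Ga w a - Ga (w_one w a) a.

Definition beta_bar (w : 'rV[R]_p) (a : 'rV[R]_q) : R :=
  if jnrm2 (gradQw w a) (gradQa w a) != 0 then
    Num.max (delta - dotv (Fw w a) (gradQw w a) / jnrm2 (gradQw w a) (gradQa w a)) 0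
  else 0.

Definition ebomlc_w (w : 'rV[R]_p) (a : 'rV[R]_q) : 'rV[R]_p :=
  w - etaw *: (Fw w a + (xi * beta_bar w a) *: gradQw w a).
Definition ebomlc_a (w : 'rV[R]_p) (a : 'rV[R]_q) : 'rV[R]_q :=
  a - etaa *: (Fa w a + (xi * beta_bar w a) *: gradQa w a).
End Step.
End Defs.

(* Main.v *)
Require Import Defs.
From HB Require Import structures.
From mathcomp Require Import all_boot all_order all_algebra.
From mathcomp Require Import all_classical all_reals all_analysis.
From mathcomp Require Import ring lra.
Import Order.TTheory GRing.Theory Num.Theory.
Import numFieldNormedType.Exports.
Local Open Scope ring_scope.
Set Implicit Arguments. Unset Strict Implicit.

Section Alg.
Variable R : realType.
Implicit Types (n : nat).

Lemma nrm2_ge0 n (u : 'rV[R]_n) : 0 <= nrm2 u.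
Proof. by apply: sumr_ge0 => i _; rewrite -expr2 sqr_ge0. Qed.

Lemma dotvC n (u v : 'rV[R]_n) : dotv u v = dotv v u.
Proof. by apply: eq_bigr => i _; rewrite mulrC. Qed.

Lemma dotvDr n (u x y : 'rV[R]_n) : dotv u (x + y) = dotv u x + dotv u y.
Proof. by rewrite /dotv -big_split; apply: eq_bigr => i _; rewrite mxE mulrDr. Qed.

Lemma dotvZr n (u x : 'rV[R]_n) k : dotv u (k *: x) = k * dotv u x.
Proof. by rewrite /dotv mulr_sumr; apply: eq_bigr => i _; rewrite mxE mulrCA. Qed.

Lemma dotvNr n (u x : 'rV[R]_n) : dotv u (- x) = - dotv u x.
Proof. by rewrite -scaleN1r dotvZr mulN1r. Qed.

Lemma nrm2Z n (u : 'rV[R]_n) k : nrm2 (k *: u) = k ^+ 2 * nrm2 u.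
Proof. by rewrite /nrm2 dotvZr dotvC dotvZr mulrA expr2. Qed.

Lemma nrm2N n (u : 'rV[R]_n) : nrm2 (- u) = nrm2 u.
Proof. by rewrite -scaleN1r nrm2Z expr2 mulN1r opprK mul1r. Qed.

Lemma nrm2_0 n : nrm2 (0 : 'rV[R]_n) = 0.
Proof. by rewrite -(scale0r (0 : 'rV[R]_n)) nrm2Z expr2 !mul0r. Qed.

Lemma nrm2D_le n (x y : 'rV[R]_n) : nrm2 (x + y) <= 2 * nrm2 x + 2 * nrm2 y.
Proof.
rewrite /nrm2 /dotv !mulr_sumr -big_split; apply: ler_sum => i _.
rewrite !mxE /=; set a := x 0 i; set b := y 0 i; have := sqr_ge0 (a - b); rewrite expr2; nra.
Qed.

Lemma dotv_amgm n (u q : 'rV[R]_n) t : 2 * t * dotv u q <= t ^+ 2 * nrm2 q + nrm2 u.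
Proof.
rewrite /nrm2 /dotv !mulr_sumr -big_split; apply: ler_sum => i _ /=.
set a := u 0 i; set b := q 0 i; have := sqr_ge0 (a - t * b); rewrite !expr2; nra.
Qed.

End Alg.

Section Desc.
Variable R : realType.

Lemma jnrm2_ge0 p q (u : 'rV[R]_p) (v : 'rV[R]_q) : 0 <= jnrm2 u v.
Proof. by rewrite /jnrm2 addr_ge0 ?nrm2_ge0. Qed.

Lemma sq_le_of_jnrm p q (u : 'rV[R]_p) (v : 'rV[R]_q) K (B : R) :
  0 <= K -> 0 <= B -> jnrm u v <= K * Num.sqrt B -> jnrm2 u v <= K ^+ 2 * B.
Proof.
move=> K0 B0; rewrite /jnrm => h.
have s0 := sqrtr_ge0 (jnrm2 u v).
have s1 := sqrtr_ge0 B.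
rewrite -(sqr_sqrtr (jnrm2_ge0 u v)) -(sqr_sqrtr B0) -exprMn.
by rewrite lerXn2r // ?nnegrE // mulr_ge0.
Qed.

Lemma lip2 p q (gw : 'rV[R]_p -> 'rV[R]_q -> 'rV[R]_p) ga L w a w' a' :
  0 < L -> grad_lipschitz gw ga L ->
  jnrm2 (gw w a - gw w' a') (ga w a - ga w' a') <= L ^+ 2 * jnrm2 (w - w') (a - a').
Proof.
move=> L0 hl; exact: (sq_le_of_jnrm (ltW L0) (jnrm2_ge0 _ _) (hl w a w' a')).
Qed.

Lemma dotvBl n (x y d : 'rV[R]_n) : dotv (x - y) d = dotv x d - dotv y d.
Proof. by rewrite dotvC dotvDr dotvNr !(dotvC d). Qed.


Lemma line_derive (V : normedModType R) (f : V -> R) (x0 v : V) (s : R) :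
  differentiable f (s *: v + x0) ->
  is_derive s (1:R) (fun t : R => f (t *: v + x0)) ('d f (s *: v + x0) v).
Proof.
move=> df.
have E : (fun h : R => h^-1 *: (((fun t : R => f (t *: v + x0)) \o shift s) (h *: 1) - f (s *: v + x0)))
   = (fun h : R => h^-1 *: ((f \o shift (s *: v + x0)) (h *: v) - f (s *: v + x0))).
  apply/funext => h /=.
  by rewrite /shift /= [h *: 1]mulr1 scalerDl addrA.
apply: DeriveDef.
  by rewrite /derivable E; exact: diff_derivable.
by rewrite /derive E -deriveE.
Qed.


Lemma descent p q (Phi : 'rV[R]_p -> 'rV[R]_q -> R) gw ga L :
  has_grad Phi gw ga -> 0 < L -> grad_lipschitz gw ga L ->
  forall w a dw da,
  Phi (w + dw) (a + da) <= Phi w a + (dotv (gw w a) dw + dotv (ga w a) da) + L * jnrm2 dw da.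
Proof.
move=> hg L0 hl w a dw da.
pose f := fun x : 'rV[R]_p * 'rV[R]_q => Phi x.1 x.2.
pose x0 : 'rV[R]_p * 'rV[R]_q := (w, a).
pose v : 'rV[R]_p * 'rV[R]_q := (dw, da).
pose phi := fun t : R => f (t *: v + x0).
pose df := fun s : R => 'd f (s *: v + x0) v.
have dfx : forall y, differentiable f y by case=> y1 y2; case: (hg y1 y2).
have der : forall s : R, is_derive s (1:R) phi (df s).
  by move=> s; apply: line_derive.
case: (MVT ltr01 (fun s _ => der s)).
  apply: continuous_subspaceT => s; apply: differentiable_continuous.
  apply/derivable1_diffP; exact: (@ex_derive _ _ _ _ _ _ _ (der s)).
move=> c; rewrite in_itv /= => /andP[c0 c1] hmvt.
have e1 : phi 1 = Phi (w + dw) (a + da).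
  by rewrite /phi /f /= !scale1r (addrC dw) (addrC da).
have e0 : phi 0 = Phi w a.
  by rewrite /phi /f /= !scale0r !add0r.
pose y1 := c *: dw + w. pose y2 := c *: da + a.
have edf : df c = dotv (gw y1 y2) dw + dotv (ga y1 y2) da.
  by rewrite /df; case: (hg y1 y2) => _ ->.
rewrite subr0 mulr1 e1 e0 edf in hmvt.
have hL := lip2 y1 y2 w a L0 hl.
have ey1 : y1 - w = c *: dw by rewrite /y1 addrK.
have ey2 : y2 - a = c *: da by rewrite /y2 addrK.
rewrite ey1 ey2 /jnrm2 !nrm2Z in hL.
have h1 := dotv_amgm (gw y1 y2 - gw w a) dw L.
have h2 := dotv_amgm (ga y1 y2 - ga w a) da L.
rewrite dotvBl in h1; rewrite dotvBl in h2.
have n1 := nrm2_ge0 dw. have n2 := nrm2_ge0 da.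
have cc : c ^+ 2 <= 1 by rewrite expr2; nra.
set X1 := dotv (gw y1 y2) dw in h1 hmvt *.
set X2 := dotv (ga y1 y2) da in h2 hmvt *.
set Z1 := dotv (gw w a) dw in h1 *.
set Z2 := dotv (ga w a) da in h2 *.
set D1 := nrm2 (gw y1 y2 - gw w a) in h1 hL.
set D2 := nrm2 (ga y1 y2 - ga w a) in h2 hL.
set N1 := nrm2 dw in h1 hL n1 *. set N2 := nrm2 da in h2 hL n2 *.
have hc2 : L ^+ 2 * (c ^+ 2 * N1 + c ^+ 2 * N2) <= L ^+ 2 * (N1 + N2).
  rewrite ler_pM2l ?exprn_gt0 //; nra.
have : 2 * L * (X1 - Z1 + (X2 - Z2)) <= 2 * L * (L * (N1 + N2)).
  rewrite !expr2 in h1 h2 hL hc2 *; nra.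
rewrite ler_pM2l ?mulr_gt0 // => hX.
rewrite /jnrm2 -/N1 -/N2 /=; lra.
Qed.

End Desc.

Section Step.
Variable R : realType.

Lemma jnrm_sq p q (u : 'rV[R]_p) (v : 'rV[R]_q) M :
  jnrm u v <= M -> 0 <= M /\ jnrm2 u v <= M ^+ 2.
Proof.
move=> h; have M0 : 0 <= M by apply: le_trans h; exact: sqrtr_ge0.
split => //; have := @sq_le_of_jnrm R p q u v M 1 M0 ler01; rewrite sqrtr1 !mulr1.
exact.
Qed.

Lemma mx0r (x : R) : x <= 0 -> Num.max x 0 = 0.
Proof. by move=> hx; apply/max_idPr. Qed.
Lemma mx0l (x : R) : 0 <= x -> Num.max x 0 = x.
Proof. by move=> hx; apply/max_idPl. Qed.

Definition Bc (L M delta : R) := delta ^+ 2 * L ^+ 2 * M ^+ 2 + 2 * delta * (M ^+ 2 * (1 + L ^+ 2)) + M ^+ 2.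
Definition K1 (L M delta : R) := delta * (M ^+ 2 * (1 + L ^+ 2)) + 2 * L * (M ^+ 2 + Bc L M delta).
Definition K2 (L M delta : R) := (M ^+ 2 + Bc L M delta) * (1 + 2 * L).

Lemma step_bound p q (F : 'rV[R]_p -> 'rV[R]_q -> R) Fw Fa Gw Ga L M delta xi e h w a :
  has_grad F Fw Fa -> 0 < L -> grad_lipschitz Fw Fa L -> grad_lipschitz Gw Ga L ->
  (forall w a, jnrm (Fw w a) (Fa w a) <= M) -> (forall w a, jnrm (Gw w a) (Ga w a) <= M) ->
  0 < delta -> 0 < xi -> xi < 1 -> 0 < e -> e < 1 -> 0 < h -> h < 1 ->
  F (ebomlc_w Fw Gw Ga delta xi e w a) (ebomlc_a Fw Fa Gw Ga delta xi e h w a)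
   <= F w a - e * (1 - xi) * nrm2 (Fw w a) + e ^+ 2 * K1 L M delta + h * K2 L M delta.
Proof.
move=> hgF L0 hlF hlG hFM hGM d0 x0 x1 e0 e1 h0 h1.
have [M0 hF] := jnrm_sq (hFM w a).
have [_ hG] := jnrm_sq (hGM w a).
set u := Fw w a in hF *; set v := Fa w a in hF *.
have hQ := lip2 w a (w_one Gw e w a) a L0 hlG.
have E : w - w_one Gw e w a = e *: Gw w a by rewrite /w_one opprB addrC subrK.
rewrite E subrr /jnrm2 nrm2Z nrm2_0 addr0 -/(gradQw Gw e w a) -/(gradQa Gw Ga e w a) in hQ.
set qw := gradQw Gw e w a in hQ *; set qa := gradQa Gw Ga e w a in hQ *.
set N2 := jnrm2 qw qa.
have nu := nrm2_ge0 u; have nv := nrm2_ge0 v; have nqw := nrm2_ge0 qw; have nqa := nrm2_ge0 qa.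
have ngw := nrm2_ge0 (Gw w a); have nga := nrm2_ge0 (Ga w a).
rewrite /jnrm2 in hF hG.
set A := M ^+ 2 * (1 + L ^+ 2).
have hN2 : N2 <= L ^+ 2 * e ^+ 2 * M ^+ 2.
  have g1 : nrm2 (Gw w a) <= M ^+ 2 by lra.
  apply: le_trans hQ _; rewrite -mulrA ler_wpM2l ?sqr_ge0 // ler_wpM2l ?sqr_ge0 //.
have hN0 : 0 <= N2 by rewrite /N2 /jnrm2; lra.
have nqwN : nrm2 qw <= N2 by rewrite /N2 /jnrm2; lra.
have nqaN : nrm2 qa <= N2 by rewrite /N2 /jnrm2; lra.
have nuM : nrm2 u <= M ^+ 2 by lra.
have nvM : nrm2 v <= M ^+ 2 by lra.
have e2 : e ^+ 2 <= 1 by rewrite expr2; nra.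
have eA : 0 <= A by rewrite /A mulr_ge0 ?sqr_ge0 // addr_ge0 ?sqr_ge0.
set r := dotv u qw.
have hr1 : r <= e * A.
  have := dotv_amgm qw u e; rewrite dotvC -/r => hh.
  have : 2 * e * r <= e ^+ 2 * A.
    apply: le_trans hh _; rewrite /A; rewrite !expr2 in hN2 nuM *; nra.
  rewrite !expr2 => hh2; nra.
have hr2 : - r <= e * A.
  have := dotv_amgm qw u (- e); rewrite dotvC -/r sqrrN => hh.
  have : 2 * e * (- r) <= e ^+ 2 * A.
    have -> : 2 * e * (- r) = 2 * (- e) * r by ring.
    apply: le_trans hh _; rewrite /A; rewrite !expr2 in hN2 nuM *; nra.
  rewrite !expr2 => hh2; nra.
have dEA : 0 <= delta * (e * A) by apply: mulr_ge0; [exact: ltW|apply: mulr_ge0; [exact: ltW|exact: eA]].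
set B := Bc L M delta.
set beta := beta_bar Fw Gw Ga delta e w a.
have hB0 : 0 <= B.
  rewrite /B /Bc; apply: addr_ge0; last exact: sqr_ge0.
  apply: addr_ge0; first by apply: mulr_ge0; [apply: mulr_ge0|]; exact: sqr_ge0.
  by apply: mulr_ge0 => //; apply: mulr_ge0 => //; exact: ltW.
have [P1 [P0 P2]] : (1 - xi) * nrm2 u - delta * (e * A) <= nrm2 u + xi * beta * r
    /\ 0 <= beta /\ beta ^+ 2 * N2 <= B.
  rewrite /beta /beta_bar -/qw -/qa -/N2 -/u -/r.
  case: ifP => hN; last first.
    rewrite mulr0 mul0r addr0 expr2 !mul0r; split; last by split.
    have := dEA.
    nra.
  have N0 : 0 < N2 by rewrite lt_def hN hN0.
  set z := r / N2.
  have rz : r = z * N2 by rewrite /z divfK // gt_eqF.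
  have cs : z ^+ 2 * N2 <= nrm2 u.
    have := dotv_amgm u qw z; rewrite -/r rz => hh.
    have : z ^+ 2 * nrm2 qw <= z ^+ 2 * N2 by rewrite ler_wpM2l ?sqr_ge0.
    rewrite !expr2 in hh *; nra.
  have Bx : (delta - z) ^+ 2 * N2 <= B.
    have : (delta - z) ^+ 2 * N2 = delta ^+ 2 * N2 - 2 * delta * r + z ^+ 2 * N2.
      by rewrite rz; ring.
    move=> ->; rewrite /B /Bc -/A.
    have t0 : N2 <= L ^+ 2 * M ^+ 2.
      apply: le_trans hN2 _; rewrite -mulrA ler_wpM2l ?sqr_ge0 //.
      by rewrite -[X in _ <= X]mul1r ler_wpM2r ?sqr_ge0.
    have t1 : delta ^+ 2 * N2 <= delta ^+ 2 * L ^+ 2 * M ^+ 2.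
      by rewrite -mulrA ler_wpM2l ?sqr_ge0.
    have t2 : - (2 * delta * r) <= 2 * delta * A.
      have : 2 * delta * (- r) <= 2 * delta * (e * A).
        by rewrite ler_wpM2l // mulr_ge0 // ltW.
      have : 2 * delta * (e * A) <= 2 * delta * A.
        have d2 : 0 <= 2 * delta by lra.
        rewrite ler_wpM2l //.
        rewrite -[X in _ <= X]mul1r ler_wpM2r //; exact: ltW.
      rewrite mulrN; lra.
    lra.
  set m := Num.max _ _.
  have hm : m = Num.max (delta - z) 0 := erefl.
  case: (leP (delta - z) 0) => hx.
    rewrite (mx0r hx) in hm; rewrite hm mulr0 mul0r addr0 expr2 !mul0r; split; last by split.
    have := dEA.
    nra.
  rewrite (mx0l (ltW hx)) in hm; rewrite hm; split; last by split => //; exact: ltW.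
  have : xi * (delta - z) * r = xi * delta * r - xi * (z ^+ 2 * N2) by rewrite rz; ring.
  move=> ->.
  have : - (xi * delta * r) <= delta * (e * A).
    have xd : 0 <= xi * delta by apply: mulr_ge0; exact: ltW.
    have : xi * delta * (- r) <= xi * delta * (e * A) by rewrite ler_wpM2l.
    have : delta * (e * A) * xi <= delta * (e * A) * 1 by rewrite ler_wpM2l // ltW.
    rewrite mulr1 mulrN; lra.
  have : xi * (z ^+ 2 * N2) <= xi * nrm2 u by rewrite ler_wpM2l // ltW.
  nra.
set k := xi * beta.
have desc := descent hgF L0 hlF w a (- (e *: (u + k *: qw))) (- (h *: (v + k *: qa))).
rewrite /ebomlc_w /ebomlc_a -/beta -/u -/v -/qw -/qa -/k.
apply: le_trans desc _.
rewrite !dotvNr !dotvZr !dotvDr !dotvZr /jnrm2 !nrm2N !nrm2Z -/r.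
rewrite -[dotv u u]/(nrm2 u) -[dotv v v]/(nrm2 v).
set s := dotv v qa.
have xb : xi ^+ 2 <= 1 by rewrite expr2; nra.
have kk : k ^+ 2 <= beta ^+ 2.
  rewrite /k exprMn -[X in _ <= X]mul1r ler_wpM2r ?sqr_ge0 //.
have b2 : beta ^+ 2 * nrm2 qw <= B.
  by apply: le_trans P2; rewrite ler_wpM2l ?sqr_ge0.
have b3 : beta ^+ 2 * nrm2 qa <= B.
  by apply: le_trans P2; rewrite ler_wpM2l ?sqr_ge0.
have kw : k ^+ 2 * nrm2 qw <= B.
  by apply: le_trans b2; rewrite ler_wpM2r.
have ka : k ^+ 2 * nrm2 qa <= B.
  by apply: le_trans b3; rewrite ler_wpM2r.
have nX : nrm2 (u + k *: qw) <= 2 * M ^+ 2 + 2 * B.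
  apply: le_trans (nrm2D_le _ _) _; rewrite nrm2Z; lra.
have nY : nrm2 (v + k *: qa) <= 2 * M ^+ 2 + 2 * B.
  apply: le_trans (nrm2D_le _ _) _; rewrite nrm2Z; lra.
have nY0 := nrm2_ge0 (v + k *: qa).
have hs : - B <= nrm2 v + k * s.
  have := dotv_amgm v qa (- beta); rewrite -/s sqrrN => hh.
  have : 2 * beta * s >= - (B + nrm2 v) by rewrite !expr2 in hh b3 *; nra.
  move=> hh2.
  have : xi * (2 * beta * s) >= xi * (- (B + nrm2 v)) by rewrite ler_wpM2l // ltW.
  rewrite /k; nra.
have T1 : e * ((1 - xi) * nrm2 u - delta * (e * A)) <= e * (nrm2 u + k * r).
  have e0' : 0 <= e := ltW e0.
  by rewrite ler_wpM2l.
have h0' : 0 <= h := ltW h0.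
have T2 : h * (- B) <= h * (nrm2 v + k * s) by rewrite ler_wpM2l.
have T3 : e ^+ 2 * nrm2 (u + k *: qw) <= e ^+ 2 * (2 * M ^+ 2 + 2 * B).
  by rewrite ler_wpM2l ?sqr_ge0.
have hh1 : h ^+ 2 <= h by rewrite expr2; nra.
have T4 : h ^+ 2 * nrm2 (v + k *: qa) <= h * (2 * M ^+ 2 + 2 * B).
  apply: le_trans (_ : h ^+ 2 * nrm2 (v + k *: qa) <= h * nrm2 (v + k *: qa)) _.
    by rewrite ler_wpM2r.
  by rewrite ler_wpM2l.
have T5 : L * (e ^+ 2 * nrm2 (u + k *: qw) + h ^+ 2 * nrm2 (v + k *: qa))
   <= L * (e ^+ 2 * (2 * M ^+ 2 + 2 * B) + h * (2 * M ^+ 2 + 2 * B)).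
  have L0' : 0 <= L := ltW L0.
  rewrite ler_wpM2l //; lra.
have hM : 0 <= h * M ^+ 2 by apply: mulr_ge0 => //; exact: sqr_ge0.
rewrite /K1 /K2 -/A -/B.
rewrite !expr2 in T1 T3 T5 hM *.
nra.
Qed.
End Step.

Unset Implicit Arguments.

Lemma bigmin_le (R : realType) (x0 : R) (F : nat -> R) (s : seq nat) i :
  i \in s -> \big[Num.min/x0]_(j <- s) F j <= F i.
Proof.
elim: s => // j s IH; rewrite inE big_cons /= => /orP[/eqP ->|hi].
  by rewrite ge_min lexx.
by rewrite ge_min (IH hi) orbT.
Qed.

Theorem theorem1 (R : realType) :
  exists Hc : R -> R -> R -> R -> R -> R -> R -> R,
  forall (p q : nat)
    (F G : 'rV[R]_p -> 'rV[R]_q -> R)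
    (Fw : 'rV[R]_p -> 'rV[R]_q -> 'rV[R]_p) (Fa : 'rV[R]_p -> 'rV[R]_q -> 'rV[R]_q)
    (Gw : 'rV[R]_p -> 'rV[R]_q -> 'rV[R]_p) (Ga : 'rV[R]_p -> 'rV[R]_q -> 'rV[R]_q)
    (L M delta xi c C : R),
    (* (A1) *)
    has_grad F Fw Fa -> has_grad G Gw Ga -> 0 < L ->
    grad_lipschitz Fw Fa L -> grad_lipschitz Gw Ga L ->
    (* (A2) *)
    (forall w a, `|F w a| <= M) -> (forall w a, `|G w a| <= M) ->
    (forall w a, jnrm (Fw w a) (Fa w a) <= M) ->
    (forall w a, jnrm (Gw w a) (Ga w a) <= M) ->
    0 < delta -> 0 < xi -> xi < 1 -> 0 < c -> 0 < C ->
  forall (T : nat) (w : nat -> 'rV[R]_p) (a : nat -> 'rV[R]_q),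
    (1 <= T)%N ->
    c / T%:R < 1 ->
    C / Num.sqrt T%:R < Num.min ((1 - xi) / L) 1 ->
    (forall t : nat, (1 <= t)%N ->
       w t.+1 = ebomlc_w Fw Gw Ga delta xi (C / Num.sqrt T%:R) (w t) (a t) /\
       a t.+1 = ebomlc_a Fw Fa Gw Ga delta xi (C / Num.sqrt T%:R) (c / T%:R) (w t) (a t)) ->
    \big[Num.min/nrm2 (Fw (w 1%N) (a 1%N))]_(1 <= t < T.+1) nrm2 (Fw (w t) (a t))
      <= Hc M L delta xi c C (F (w 1%N) (a 1%N)) / Num.sqrt T%:R.
Proof.
exists (fun M L delta xi c C _ => (2 * M + C ^+ 2 * K1 L M delta + c * K2 L M delta) / ((1 - xi) * C)).
move=> p q F G Fw Fa Gw Ga L M delta xi c C hgF hgG L0 hlF hlG hFb hGb hFM hGM d0 x0 x1 c0 C0.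
move=> T w a T1 hc hC hrec.
set e := C / Num.sqrt T%:R.
set h := c / T%:R.
have Tp : 0 < T%:R :> R by rewrite ltr0n.
have sT : 0 < Num.sqrt T%:R :> R by rewrite sqrtr_gt0.
have e0 : 0 < e by rewrite divr_gt0.
have e1 : e < 1 by move: hC; rewrite lt_min => /andP[].
have h0 : 0 < h by rewrite divr_gt0.
set n := fun t => nrm2 (Fw (w t) (a t)).
set K := e ^+ 2 * K1 L M delta + h * K2 L M delta.
have step : forall t, (1 <= t)%N ->
    F (w t.+1) (a t.+1) <= F (w t) (a t) - e * (1 - xi) * n t + K.
  move=> t ht; have [-> ->] := hrec t ht.
  rewrite /K addrA; exact: step_bound.
have sum : forall m, e * (1 - xi) * (\sum_(1 <= t < m.+1) n t)
    <= F (w 1%N) (a 1%N) - F (w m.+1) (a m.+1) + m%:R * K.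
  elim=> [|m IH]; first by rewrite big_geq // mulr0 subrr mul0r addr0.
  rewrite big_nat_recr //= mulrDr.
  have := step m.+1 (ltn0Sn m).
  rewrite -[m.+1]addn1 natrD mulrDl mul1r addn1; lra.
have hS := sum T.
have FF : F (w 1%N) (a 1%N) - F (w T.+1) (a T.+1) <= 2 * M.
  have := ler_norm (F (w 1%N) (a 1%N)); have := ler_norm (- F (w T.+1) (a T.+1)).
  rewrite normrN => h1 h2; have := hFb (w 1%N) (a 1%N); have := hFb (w T.+1) (a T.+1); lra.
have sq : Num.sqrt T%:R ^+ 2 = T%:R :> R by rewrite sqr_sqrtr // ler0n.
have TK : T%:R * K = C ^+ 2 * K1 L M delta + c * K2 L M delta.
  rewrite /K /e /h; move: sq sT; set s0 := Num.sqrt _ => sq sT; rewrite -sq.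
  field; by rewrite gt_eqF.
have eT : e * T%:R = C * Num.sqrt T%:R.
  rewrite /e; move: sq sT; set s0 := Num.sqrt _ => sq sT; rewrite -sq.
  field; by rewrite gt_eqF.
set m := \big[Num.min/_]_(1 <= t < T.+1) _.
have mle : forall t, (1 <= t < T.+1)%N -> m <= n t.
  move=> t ht; apply: bigmin_le; by rewrite mem_index_iota.
have Sm : m * T%:R <= \sum_(1 <= t < T.+1) n t.
  have := @ler_sum_nat R 1 T.+1 (fun _ => m) n mle.
  by rewrite sumr_const_nat subn1 /= mulr_natr.
have xi0 : 0 < 1 - xi by lra.
have mm : m * ((1 - xi) * C * Num.sqrt T%:R) <= 2 * M + C ^+ 2 * K1 L M delta + c * K2 L M delta.
  have : e * (1 - xi) * (m * T%:R) <= e * (1 - xi) * \sum_(1 <= t < T.+1) n t.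
    by rewrite ler_wpM2l // mulr_ge0 // ltW.
  have -> : e * (1 - xi) * (m * T%:R) = m * ((1 - xi) * C * Num.sqrt T%:R).
    have -> : m * ((1 - xi) * C * Num.sqrt T%:R) = m * (1 - xi) * (C * Num.sqrt T%:R) by ring.
    rewrite -eT; ring.
  lra.
rewrite ler_pdivlMr // ler_pdivlMr; last by apply: mulr_gt0.
have -> : m * Num.sqrt T%:R * ((1 - xi) * C) = m * ((1 - xi) * C * Num.sqrt T%:R) by ring.
exact: mm.
Qed.
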